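(* Let $S\in U_q(\mathfrak h)^{\otimes2}$ be invertible, with $s:=\log_qS=\sum_{\mu,\nu}s_{\mu\nu}\zeta^{\alpha_\mu}\otimes\zeta^{\alpha_\nu}\in\mathfrak h\otimes\mathfrak h$. Put $m(s)=\sum s_{\mu\nu}\zeta^{\alpha_\mu}\zeta^{\alpha_\nu}$, and for each index $\mu$ let $$Y_\mu=-\zeta^{\alpha_\mu}+(\mathrm{id}\otimes\ell_\mu)(s)-(\ell_\mu\otimes\mathrm{id})(s)\in\mathfrak h,$$ where $\ell_\mu$ is the linear form $h\mapsto(\zeta^{\alpha_\mu},h)$. Define $$M^{(0)}(x)=q^{-\frac14m(\Omega_{\mathfrak h})-\frac12m(s)}\prod_\mu x_\mu^{\frac12Y_\mu}\in\mathbb A(\mathfrak h)\otimes U_q(\mathfrak h),$$ so that $M^{(0)}(x)^2=k^{-1}\,m(S^{-1})\prod_\mu x_\mu^{Y_\mu}$, where $k=q^{\frac12m(\Omega_{\mathfrak h})}$ and $m(S^{-1})=q^{-m(s)}$. Then $M^{(0)}(x)$ is invertible and satisfies $$\Delta(M^{(0)}(x))=S_{12}^{-1}\,M^{(0)}_1(xq^{h_2})\,M^{(0)}_2(x),\qquad M^{(0)}_1(xq^{h_2})^2=M^{(0)}_1(x)^2\,S_{12}\,S_{21}^{-1}\,K^{-1}.$$ If moreover $K\,S_{12}\,S_{21}=1\otimes1$, then $M^{(0)}(x)^2=\prod_\mu x_\mu^{Y_\mu}$.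
   Context: Setting. - $\mathfrak g$ is a simply-laced finite or non-twisted affine Kac–Moody algebra with Cartan subalgebra $\mathfrak h$, simple coroots $h_{\alpha_\mu}$, and invariant form $(\cdot,\cdot)$. - The index $\mu$ runs over the simple roots, and additionally over the symbol $d$ in the affine case, with $h_{\alpha_d}:=d$ and $\zeta^{\alpha_d}:=\zeta^d=c$. Thus $\{\zeta^{\alpha_\mu}\}$ is the basis of $\mathfrak h$ dual to $\{h_{\alpha_\mu}\}$ for $(\cdot,\cdot)$. - $\Omega_{\mathfrak h}=\sum_\mu\zeta^{\alpha_\mu}\otimes h_{\alpha_\mu}$, $K=q^{\Omega_{\mathfrak h}}$, and $m$ denotes multiplication $\mathfrak h\otimes\mathfrak h\to S(\mathfrak h)$. - $U_q(\mathfrak h)$ is the commutative algebra generated by the $q^{hh'}$ ($h,h'\in\mathfrak h\oplus\mathbb C$), with $\Delta(q^h)=q^h\otimes q^h$. Hence $\Delta(q^{hh'})=q^{hh'}\otimes q^{hh'}\,q^{h\otimes h'+h'\otimes h}$, with the tensor square extended by the elements $q^{h\otimes h'}$. - $\mathbb A(\mathfrak h)$ is the commutative Hopf algebra generated by symbols $x_\mu^h$ ($h\in\mathfrak h+\mathbb C1$) with $x_\mu^{h+h'}=x_\mu^hx_\mu^{h'}$ and $\Delta(x_\mu^h)=x_\mu^h\otimes x_\mu^h$; $\Delta$ acts on $\mathbb A(\mathfrak h)\otimes U_q(\mathfrak h)$ through the $U_q(\mathfrak h)$ factor. - The shifted argument $xq^{h_2}$ means: each factor $x_\mu^{Y}$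 with $Y$ in tensor factor 1 is replaced by $x_\mu^Y\,q^{Y\otimes h_{\alpha_\mu}}$, where $h_{\alpha_\mu}$ sits in tensor factor 2. *)

(* Defs.v *)
From HB Require Import structures.
From mathcomp Require Import all_boot all_order all_algebra.
Set Implicit Arguments. Unset Strict Implicit. Unset Printing Implicit Defensive.
Import Order.TTheory GRing.Theory Num.Theory.
Local Open Scope ring_scope.

Definition simply_laced_cartan (l : nat) (A : 'M[int]_l) : Prop :=
  A^T = A /\ (forall i, A i i = 2%:Z) /\
  (forall i j, i != j -> A i j = 0 \/ A i j = - 1).

Definition indecomposable (l : nat) (A : 'M[int]_l) : Prop :=
  forall S : {set 'I_l}, S != set0 -> S != setT ->
    exists i j, [/\ i \in S, j \notin S & A i j != 0].

Definition qform (l : nat) (A : 'M[int]_l) (v : 'rV[rat]_l) : rat :=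
  (v *m map_mx (fun z : int => z%:~R) A *m v^T) 0 0.

Definition finite_type (l : nat) (A : 'M[int]_l) : Prop :=
  simply_laced_cartan A /\ indecomposable A /\
  (forall v : 'rV[rat]_l, v != 0 -> 0 < qform A v).

Definition affine_type (l : nat) (A : 'M[int]_l) : Prop :=
  simply_laced_cartan A /\ indecomposable A /\
  (forall v : 'rV[rat]_l, 0 <= qform A v) /\
  \rank (map_mx (fun z : int => (z%:~R : rat)) A) = l.-1.

(* G : 'M[F]_n is the Gram matrix ((h_{alpha_mu}, h_{alpha_nu}))_{mu,nu}
   of the invariant form, the index mu running over the simple roots
   (and over the extra symbol d, placed last, in the affine case). *)
Definition finite_gram (F : numClosedFieldType) (n : nat) (G : 'M[F]_n) : Prop :=
  exists A : 'M[int]_n, finite_type A /\ G = map_mx (fun z : int => z%:~R) A.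

(* affine realization: (h_i,h_j) = a_ij, (h_i,d) = delta_{i,0}, (d,d) = 0,
   where alpha_0 is a node whose mark in c = sum_i a_i h_i is a_0 = 1 *)
Definition affine_gram (F : numClosedFieldType) (n : nat) (G : 'M[F]_n) : Prop :=
  exists (l : nat) (A : 'M[int]_l) (i0 : 'I_l) (e : (l + 1)%N = n),
    affine_type A /\
    (exists a : 'rV[int]_l, a *m A = 0 /\ (forall i, 0 < a 0 i) /\ a 0 i0 = 1) /\
    G = castmx (e, e)
          (block_mx (map_mx (fun z : int => z%:~R) A)
                    (delta_mx i0 0 : 'M[F]_(l, 1))
                    (delta_mx 0 i0 : 'M[F]_(1, l))
                    (0 : 'M[F]_1)).

Definition simply_laced_KM_gram (F : numClosedFieldType) (n : nat) (G : 'M[F]_n) : Prop :=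
  finite_gram G \/ affine_gram G.

(*    h      = 'rV[F]_n  (v <-> sum_a v_a h_a)                          *)
(*    h (x) h = 'M[F]_n  (T <-> sum_{a,b} T_ab h_a (x) h_b)             *)
(*    S^2(h) = symmetric matrices (Q <-> sum_{a,b} Q_ab h_a h_b)        *)
Section LinAlg.
Variables (F : numClosedFieldType) (n : nat).

Definition hb (mu : 'I_n) : 'rV[F]_n := delta_mx 0 mu.
Definition form (G : 'M[F]_n) (u v : 'rV[F]_n) : F := (u *m G *m v^T) 0 0.
(* dual basis zeta^{alpha_mu}: (zeta^mu, h_nu) = delta_{mu nu} *)
Definition zeta (G : 'M[F]_n) (mu : 'I_n) : 'rV[F]_n := row mu (invmx G).
Definition tens (u v : 'rV[F]_n) : 'M[F]_n := u^T *m v.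
Definition Omega (G : 'M[F]_n) : 'M[F]_n := \sum_mu tens (zeta G mu) (hb mu).
Definition ell (G : 'M[F]_n) (mu : 'I_n) (v : 'rV[F]_n) : F := form G (zeta G mu) v.
Definition id_ot (f : 'rV[F]_n -> F) (T : 'M[F]_n) : 'rV[F]_n :=
  \sum_a \sum_b (T a b * f (hb b)) *: hb a.
Definition ot_id (f : 'rV[F]_n -> F) (T : 'M[F]_n) : 'rV[F]_n :=
  \sum_a \sum_b (T a b * f (hb a)) *: hb b.
(* multiplication m : h (x) h -> S^2(h) *)
Definition msym (T : 'M[F]_n) : 'M[F]_n := 2^-1 *: (T + T^T).

(* An element  q^Q prod_mu x_mu^{X_mu}  of A(h) (x) U_q(h) is recorded   *)
(* by its exponents: X (row mu = exponent of x_mu, in h) and Q in S^2(h).*)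
Record mono1 := Mono1 { x1 : 'M[F]_n ; q1 : 'M[F]_n }.
Definition mul1 (M N : mono1) := Mono1 (x1 M + x1 N) (q1 M + q1 N).
Definition one1 := Mono1 0 0.
Definition inv1 (M : mono1) := Mono1 (- x1 M) (- q1 M).
Definition sq1 (M : mono1) := mul1 M M.
Definition qexp1 (Q : 'M[F]_n) := Mono1 0 Q.
Definition xprod (Y : 'I_n -> 'rV[F]_n) := Mono1 (\matrix_(mu, a) Y mu 0 a) 0.

(* Elements of A(h) (x) U_q(h)^{(x)2} (tensor square extended by the
   q^{h (x) h'}):  prod_mu x_mu^{Xa_mu (x) 1} x_mu^{1 (x) Xb_mu}
   (q^{Qa} (x) q^{Qb}) q^{C},  Qa,Qb in S^2(h), C in h (x) h. *)
Record mono2 := Mono2 { xa : 'M[F]_n ; xb : 'M[F]_n ;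
                        qa : 'M[F]_n ; qb : 'M[F]_n ; qc : 'M[F]_n }.
Definition mul2 (M N : mono2) :=
  Mono2 (xa M + xa N) (xb M + xb N) (qa M + qa N) (qb M + qb N) (qc M + qc N).
Definition one2 := Mono2 0 0 0 0 0.
Definition inv2 (M : mono2) := Mono2 (- xa M) (- xb M) (- qa M) (- qb M) (- qc M).
Definition sq2 (M : mono2) := mul2 M M.
Definition qexp2 (T : 'M[F]_n) := Mono2 0 0 0 0 T.
(* coproduct: Delta(x^h) = x^h (x) x^h, Delta(q^{Q}) = (q^Q (x) q^Q) q^{Q + Q^T}
   (for Q = hh': q^{hh'} (x) q^{hh'} q^{h (x) h' + h' (x) h}) *)
Definition Delta (M : mono1) := Mono2 (x1 M) (x1 M) (q1 M) (q1 M) (q1 M + (q1 M)^T).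
Definition emb1 (M : mono1) := Mono2 (x1 M) 0 (q1 M) 0 0.
Definition emb2 (M : mono1) := Mono2 0 (x1 M) 0 (q1 M) 0.
(* substitution x -> x q^{h_2}: x_mu^{Y (x) 1} -> x_mu^{Y (x) 1} q^{Y (x) h_mu} *)
Definition shift (M : mono2) :=
  Mono2 (xa M) (xb M) (qa M) (qb M)
        (qc M + \sum_mu tens (row mu (xa M)) (hb mu)).

Definition Yvec (G s : 'M[F]_n) (mu : 'I_n) : 'rV[F]_n :=
  - zeta G mu + id_ot (ell G mu) s - ot_id (ell G mu) s.

Definition M0 (G s : 'M[F]_n) : mono1 :=
  mul1 (qexp1 (- (4%:R^-1 *: msym (Omega G)) - 2%:R^-1 *: msym s))
       (xprod (fun mu => 2%:R^-1 *: Yvec G s mu)).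

Definition kk (G : 'M[F]_n) : mono1 := qexp1 (2%:R^-1 *: msym (Omega G)).

End LinAlg.

(* Main.v *)
Require Import Defs.
From HB Require Import structures.
From mathcomp Require Import all_boot all_order all_algebra.
Import Order.TTheory GRing.Theory Num.Theory.
Local Open Scope ring_scope.

Lemma unit_of_ker (K : fieldType) (n : nat) (A : 'M[K]_n) :
  (forall u : 'rV_n, u *m A = 0 -> u = 0) -> A \in unitmx.
Proof.
move=> H; rewrite -row_free_unit -kermx_eq0; apply/eqP/row_matrixP => i.
by rewrite row0; apply: H; rewrite -row_mul mulmx_ker row0.
Qed.

Lemma finite_unit (F : numClosedFieldType) (n : nat) (A : 'M[int]_n) :
  finite_type A -> map_mx (fun z : int => (z%:~R : F)) A \in unitmx.
Proof.
move=> [_ [_ Hpos]].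
have Hq : map_mx (fun z : int => (z%:~R : rat)) A \in unitmx.
  apply: unit_of_ker => u Hu; apply/eqP; apply/negPn/negP => /Hpos.
  by rewrite /qform Hu mul0mx mxE ltxx.
rewrite unitmxE unitfE.
have -> : \det (map_mx (fun z : int => (z%:~R : F)) A) = (\det A)%:~R.
  exact: (det_map_mx (intr : int -> F)).
move: Hq; rewrite unitmxE unitfE.
have -> : \det (map_mx (fun z : int => (z%:~R : rat)) A) = (\det A)%:~R.
  exact: (det_map_mx (intr : int -> rat)).
by rewrite !intr_eq0.
Qed.

Lemma affine_unit (F : numClosedFieldType) (l : nat) (A : 'M[int]_l) (i0 : 'I_l)
  (a : 'rV[int]_l) :
  affine_type A -> a *m A = 0 -> a 0 i0 = 1 ->
  block_mx (map_mx (fun z : int => z%:~R) A)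
                    (delta_mx i0 0 : 'M[F]_(l, 1))
                    (delta_mx 0 i0 : 'M[F]_(1, l))
                    (0 : 'M[F]_1) \in unitmx.
Proof.
move=> [[Asym _] [_ [_ Hrk]]] HaA Ha0.
set A' := map_mx (fun z : int => (z%:~R : F)) A.
set a' := map_mx (fun z : int => (z%:~R : F)) a.
have A'sym : A'^T = A' by rewrite /A' map_trmx Asym.
have a'A : a' *m A' = 0.
  by rewrite /a' /A' -(map_mxM (intr : int -> F)) HaA map_mx0.
have a'i0 : a' 0 i0 = 1 by rewrite mxE Ha0.
have rkA' : \rank A' = l.-1.
  rewrite -Hrk -(mxrank_map (ratr : rat -> F)); congr (\rank _).
  by apply/matrixP => i j; rewrite !mxE rmorph_int.
apply: unit_of_ker => u Hu.
rewrite -(hsubmxK u) in Hu *.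
set v := lsubmx u in Hu *; set t := rsubmx u in Hu *.
move: Hu; rewrite mul_row_block mulmx0 addr0 => /eqP; rewrite row_mx_eq0.
case/andP => /eqP H1 /eqP H2.
have vi0 : v 0 i0 = 0.
  have H2' : v *m delta_mx i0 ord0 = 0 := H2.
  by have := congr1 (fun M : 'M[F]_1 => M ord0 ord0) H2'; rewrite -colE !mxE.
have Hd : delta_mx 0 i0 *m a'^T = 1%:M :> 'M[F]_1.
  apply/matrixP => i j; rewrite !ord1 -rowE !mxE /=.
  by rewrite Ha0.
have t0 : t = 0.
  have := congr1 (fun M => M *m a'^T) H1.
  rewrite mulmxDl -mulmxA -[in X in X + _ = _ -> _]A'sym -trmx_mul a'A trmx0 mulmx0 add0r.
  by rewrite -mulmxA Hd mulmx1 mul0mx.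
rewrite t0 mul0mx addr0 in H1.
have l0 : (0 < l)%N := leq_ltn_trans (leq0n _) (ltn_ord i0).
have Hk : (v <= kermx A')%MS by apply/sub_kermxP.
have Ha : (a' <= kermx A')%MS by apply/sub_kermxP.
have a'n0 : a' != 0 by apply/eqP => /matrixP/(_ 0 i0); rewrite a'i0 mxE; apply/eqP; exact: oner_neq0.
have : (a' == kermx A')%MS.
  rewrite -(mxrank_leqif_eq Ha).2 mxrank_ker rkA' rank_rV a'n0.
  by case: (l) l0 => // k _; rewrite /= subSn // subnn.
case/andP => _ Hka.
have /sub_rVP [c Hc] := submx_trans Hk Hka.
have c0 : c = 0 by move: vi0; rewrite Hc mxE a'i0 mulr1.
by rewrite t0 Hc c0 scale0r row_mx0.
Qed.

Lemma gram_props (F : numClosedFieldType) (n : nat) (G : 'M[F]_n) :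
  simply_laced_KM_gram G -> G^T = G /\ G \in unitmx.
Proof.
case=> [[A [HA ->]] | [l [A [i0 [e [HA [[a [HaA [_ Ha0]]] HG]]]]]]].
  split; last exact: finite_unit.
  by case: HA => [[Asym _] _]; rewrite map_trmx Asym.
subst n; rewrite castmx_id in HG; rewrite HG; split; last exact: affine_unit HA HaA Ha0.
case: HA => [[Asym _] _].
by rewrite tr_block_mx map_trmx Asym !trmx_delta trmx0.
Qed.

Section Alg.
Variables (F : numClosedFieldType) (n : nat) (G : 'M[F]_n).
Hypothesis Gsym : G^T = G.
Hypothesis Gu : G \in unitmx.

Lemma sum_delta (f : 'I_n -> F) j : \sum_i f i * (i == j)%:R = f j.
Proof.
rewrite (bigD1 j) //= eqxx mulr1 big1 ?addr0 // => i /negbTE ->; by rewrite mulr0.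
Qed.

Lemma sum_delta' (f : 'I_n -> F) j : \sum_i f i * (j == i)%:R = f j.
Proof. by rewrite -(sum_delta f j); apply: eq_bigr => i _; rewrite eq_sym. Qed.

Lemma ell_hb mu b : ell G mu (hb F b) = (b == mu)%:R.
Proof.
rewrite /ell /Defs.form /zeta /hb -row_mul mulVmx // row1 trmx_delta mul_delta_mx_cond.
by rewrite mulmxnE !mxE !eqxx /= eq_sym.
Qed.

Lemma id_ot_ell mu (T : 'M[F]_n) : id_ot (ell G mu) T = (col mu T)^T.
Proof.
apply/rowP => a; rewrite /id_ot summxE !mxE.
under eq_bigr do rewrite summxE.
under eq_bigr do under eq_bigr do rewrite !mxE ell_hb eqxx /=.
under eq_bigr do rewrite -mulr_suml sum_delta.
by rewrite sum_delta'.
Qed.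

Lemma ot_id_ell mu (T : 'M[F]_n) : ot_id (ell G mu) T = row mu T.
Proof.
apply/rowP => a; rewrite /ot_id summxE !mxE.
under eq_bigr do rewrite summxE.
under eq_bigr do under eq_bigr do rewrite !mxE ell_hb eqxx /=.
rewrite (bigD1 mu) //= [X in _ + X]big1 ?addr0.
  under eq_bigr do rewrite eqxx mulr1.
  by rewrite sum_delta'.
move=> i /negbTE Hi; apply: big1 => j _; by rewrite Hi mulr0 mul0r.
Qed.

Lemma Omega_eq : Omega G = (invmx G)^T.
Proof.
apply/matrixP => i j; rewrite /Omega summxE !mxE.
under eq_bigr do rewrite !mxE big_ord1 !mxE eqxx /=.
by rewrite sum_delta'.
Qed.

Lemma tens_sum (X : 'M[F]_n) : \sum_mu tens (row mu X) (hb F mu) = X^T.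
Proof.
apply/matrixP => i j; rewrite summxE !mxE.
under eq_bigr do rewrite !mxE big_ord1 !mxE eqxx /=.
by rewrite sum_delta'.
Qed.

Lemma Ymat_eq (s : 'M[F]_n) (c : F) :
  (\matrix_(mu, a) (c *: Yvec G s mu) 0 a) = c *: (- invmx G + s^T - s).
Proof.
apply/matrixP => mu a; rewrite !mxE /Yvec id_ot_ell ot_id_ell /zeta !mxE.
done.
Qed.
End Alg.

Theorem mainTheorem3 (F : numClosedFieldType) (n : nat) (G : 'M[F]_n)
    (hG : simply_laced_KM_gram G) (s : 'M[F]_n) :
  let S12 := qexp2 s in
  let S21 := qexp2 s^T in
  let K := qexp2 (Omega G) in
  let M := M0 G s in
  [/\ sq1 M = mul1 (mul1 (inv1 (kk G)) (qexp1 (- msym s))) (xprod (Yvec G s)),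
      (exists N, mul1 M N = one1 F n /\ mul1 N M = one1 F n),
      Delta M = mul2 (mul2 (inv2 S12) (shift (emb1 M))) (emb2 M),
      sq2 (shift (emb1 M)) = mul2 (mul2 (mul2 (sq2 (emb1 M)) S12) (inv2 S21)) (inv2 K)
    & (mul2 (mul2 K S12) S21 = one2 F n -> sq1 M = xprod (Yvec G s))].
Proof.
have [Gsym Gu] := @gram_props F n G hG.
set W := invmx G.
have Wsym : W^T = W by rewrite /W trmx_inv Gsym.
have We i j : W j i = W i j by rewrite -{1}Wsym mxE.
have Om : Omega G = W by rewrite Omega_eq // Wsym.
have Ye mu a : Yvec G s mu 0 a = - W mu a + s a mu - s mu a.
  by rewrite /Yvec id_ot_ell // ot_id_ell // /zeta !mxE.
move=> S12 S21 K M.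
set X := 2%:R^-1 *: (- W + s^T - s).
set Q := - (4%:R^-1 *: msym W) - 2%:R^-1 *: msym s.
have HM : M = Mono1 X Q.
  rewrite /M /M0 /mul1 /xprod /qexp1 /= add0r addr0 Om; congr Mono1.
  by apply/matrixP => i j; rewrite !mxE id_ot_ell // ot_id_ell // !mxE.
have HY : xprod (Yvec G s) = Mono1 (- W + s^T - s) 0.
  rewrite /xprod; congr Mono1.
  by apply/matrixP => i j; rewrite !mxE id_ot_ell // ot_id_ell // !mxE.
have Hsh : \sum_mu tens (row mu X) (hb F mu) = X^T by apply: tens_sum.
rewrite HY /S12 /S21 /K Om HM {HM HY M S12 S21 K}.
have D (z : F) : 2%:R^-1 * z + 2%:R^-1 * z = z.
  have e1 : (1 : F) = 2%:R^-1 + 2%:R^-1 by rewrite {1}(splitr 1) !mul1r.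
  by rewrite -mulrDl -e1 mul1r.
have q4 : (4%:R^-1 : F) = 2%:R^-1 * 2%:R^-1 by rewrite -invfM -natrM.
have L1 (p q : F) : - (2%:R^-1 * (2%:R^-1 * p)) - 2%:R^-1 * (2%:R^-1 * q) +
   (- (2%:R^-1 * (2%:R^-1 * p)) - 2%:R^-1 * (2%:R^-1 * q)) = - (2%:R^-1 * p) - 2%:R^-1 * q.
  have e : - (2%:R^-1 * (2%:R^-1 * p)) - 2%:R^-1 * (2%:R^-1 * q) =
     2%:R^-1 * (- (2%:R^-1 * p) - 2%:R^-1 * q) by rewrite mulrBr mulrN.
  by rewrite e D.
have L2 (x y z : F) : (- x - x) + (- y + x - z) = - y - x - z.
  by rewrite addrC (addrAC (-y)) addrA addrK addrAC.
have Hw i j : 2%:R^-1 * (W i j + W j i) = W i j by rewrite We mulrDr D.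
split.
- rewrite /sq1 /mul1 /kk /inv1 /qexp1 /= Om.
  congr Mono1; apply/matrixP => i j; rewrite !mxE.
    by rewrite D oppr0 !add0r.
  by rewrite q4 -!mulrA L1 Hw addr0.
- by exists (inv1 (Mono1 X Q)); split; rewrite /mul1 /inv1 /one1 /= ?addrN ?addNr.
- rewrite /Delta /mul2 /inv2 /shift /emb1 /emb2 /qexp2 /=.
  rewrite Hsh; congr Mono2; try by rewrite ?oppr0 ?add0r ?addr0.
  apply/matrixP => i j; rewrite !mxE.
  rewrite (addrC (W j i)) (addrC (s j i)) q4 -!mulrA L1 Hw add0r addr0 (We i j).
  rewrite mulrBr !mulrDr mulrN opprD addrA.
  have Ea : - s i j = - (2%:R^-1 * s i j) - 2%:R^-1 * s i j by rewrite -opprD D.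
  by rewrite Ea L2.
- rewrite /sq2 /mul2 /inv2 /shift /emb1 /emb2 /qexp2 /=.
  rewrite Hsh; congr Mono2; try by rewrite ?oppr0 ?add0r ?addr0.
  apply/matrixP => i j; rewrite !mxE.
  by rewrite !add0r D (We i j) -addrA addrC.
- move=> /(congr1 (@qc F n)) /= H.
  have {}H i j := congr1 (fun A : 'M[F]_n => A i j) H.
  rewrite /sq1 /mul1 /=.
  congr Mono1; apply/matrixP => i j; rewrite !mxE.
    by rewrite D.
  have := H i j; rewrite !mxE -addrA => /eqP; rewrite addr_eq0 => /eqP Hs.
  by rewrite q4 -!mulrA L1 Hw Hs mulrN opprK subrr.
Qed.
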